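(* Let $a<b$ be real numbers and let $f:[a,b]\to\mathbb{R}$ be a convex Riemann integrable function. Then for all $t\in[0,1]$, \[ f(tb+(1-t)a)\le (1-t)\int_0^{1}f\big(t\alpha(b-a)+a\big)\,d\alpha+t\int_0^{1}f\big((1-t)\alpha(b-a)+tb+(1-t)a\big)\, d\alpha \le tf(b)+(1-t)f(a). \] *)

(* Defs.v *)
From Stdlib Require Import Reals.
From Coquelicot Require Import Coquelicot.
Open Scope R_scope.

Definition convex_on (a b : R) (f : R -> R) : Prop :=
  forall x y l, a <= x <= b -> a <= y <= b -> 0 <= l <= 1 ->
    f (l * x + (1 - l) * y) <= l * f x + (1 - l) * f y.

(* Main.v *)
Require Import Defs.
From Stdlib Require Import Reals Lra.
From Coquelicot Require Import Coquelicot.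
Open Scope R_scope.

Lemma aux (d I : R) : d <> 0 -> I = d * I / d.
Proof. intros. field. auto. Qed.

Section S.
Variables (a b : R) (f : R -> R).
Hypothesis hconv : convex_on a b f.
Hypothesis hint : ex_RInt f a b.

Lemma exf (x y : R) : a <= x <= b -> a <= y <= b -> ex_RInt f x y.
Proof.
  intros Hx Hy.
  assert (H1 : ex_RInt f x b) by (apply (ex_RInt_Chasles_2 f a x b); lra || exact hint).
  destruct (Rle_dec x y) as [Hxy|Hxy].
  - apply (ex_RInt_Chasles_1 f x y b); [lra|exact H1].
  - apply ex_RInt_swap.
    assert (H2 : ex_RInt f y b) by (apply (ex_RInt_Chasles_2 f a y b); lra || exact hint).
    apply (ex_RInt_Chasles_1 f y x b); [lra|exact H2].
Qed.

Lemma exg (x y : R) : a <= x <= b -> a <= y <= b ->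
  ex_RInt (fun al => f ((y - x) * al + x)) 0 1.
Proof.
  intros Hx Hy.
  destruct (Req_dec y x) as [E|E].
  - apply (ex_RInt_ext (fun _ => f x)).
    + intros z _. f_equal. rewrite E. ring.
    + apply ex_RInt_const.
  - assert (H : ex_RInt f ((y - x) * 0 + x) ((y - x) * 1 + x)).
    { replace ((y - x) * 0 + x) with x by ring.
      replace ((y - x) * 1 + x) with y by ring. apply exf; auto. }
    apply ex_RInt_comp_lin in H.
    apply (ex_RInt_scal _ _ _ (/ (y - x))) in H.
    apply (ex_RInt_ext _ _ _ _ (fun z _ => eq_refl) ) in H.
    revert H. apply ex_RInt_ext. intros z _.
    change (/ (y - x) * ((y - x) * f ((y - x) * z + x)) = f ((y - x) * z + x)).
    field. lra.
Qed.

Lemma intg (x y : R) : a <= x <= b -> a <= y <= b -> x <> y ->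
  RInt (fun al => f ((y - x) * al + x)) 0 1 = RInt f x y / (y - x).
Proof.
  intros Hx Hy E.
  assert (H : ex_RInt f ((y - x) * 0 + x) ((y - x) * 1 + x)).
  { replace ((y - x) * 0 + x) with x by ring.
    replace ((y - x) * 1 + x) with y by ring. apply exf; auto. }
  pose proof (RInt_comp_lin f (y - x) x 0 1 H) as Hc.
  rewrite RInt_scal in Hc by (apply exg; auto).
  replace ((y - x) * 0 + x) with x in Hc by ring.
  replace ((y - x) * 1 + x) with y in Hc by ring.
  change ((y - x) * RInt (fun al => f ((y - x) * al + x)) 0 1 = RInt f x y) in Hc.
  set (I := RInt (fun al => f ((y - x) * al + x)) 0 1) in *.
  rewrite <- Hc. apply aux. lra.
Qed.

Lemma HH (x y : R) : a <= x <= b -> a <= y <= b -> x <= y ->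
  f ((x + y) / 2) <= RInt (fun al => f ((y - x) * al + x)) 0 1 <=
  (f x + f y) / 2.
Proof.
  intros Hx Hy Hxy.
  split.
  - destruct (Req_dec x y) as [E|E].
    + subst y. rewrite (RInt_ext _ (fun _ => f x)).
      * rewrite RInt_const.
        replace ((x + x) / 2) with x by field.
        change (f x <= (1 - 0) * f x). lra.
      * intros z _. f_equal. ring.
    + assert (Hs : RInt (fun al => f ((x - y) * al + y)) 0 1 =
                   RInt (fun al => f ((y - x) * al + x)) 0 1).
      { rewrite (intg y x) by (auto; lra). rewrite (intg x y) by (auto; lra).
        rewrite <- (opp_RInt_swap f x y) by (apply exf; auto).
        change (- RInt f x y / (x - y) = RInt f x y / (y - x)).
        field; lra. }
      set (g := fun al => f ((y - x) * al + x)) in *.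
      set (h := fun al => f ((x - y) * al + y)) in *.
      assert (Eg : ex_RInt g 0 1) by (apply (exg x y); auto).
      assert (Eh : ex_RInt h 0 1) by (apply (exg y x); auto).
      assert (Es : ex_RInt (fun al => scal (/2) (plus (g al) (h al))) 0 1).
      { exact (ex_RInt_scal (fun al => plus (g al) (h al)) 0 1 (/2) (ex_RInt_plus g h 0 1 Eg Eh)). }
      assert (Ei : RInt (fun al => scal (/2) (plus (g al) (h al))) 0 1
                   = / 2 * (RInt g 0 1 + RInt h 0 1)).
      { rewrite (RInt_scal _ _ _ _ (ex_RInt_plus _ _ _ _ Eg Eh)).
        change (scal (/2) (RInt (fun y0 => plus (g y0) (h y0)) 0 1) = scal (/2) (plus (RInt g 0 1) (RInt h 0 1))).
        f_equal. exact (RInt_plus g h 0 1 Eg Eh). }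
      assert (Ec : RInt (fun _ => f ((x + y) / 2)) 0 1 = f ((x + y) / 2)).
      { rewrite RInt_const. change ((1 - 0) * f ((x + y) / 2) = f ((x + y) / 2)). ring. }
      assert (Hl : RInt (fun _ => f ((x + y) / 2)) 0 1 <=
                   RInt (fun al => scal (/2) (plus (g al) (h al))) 0 1).
      { apply (RInt_le (fun _ => f ((x + y) / 2)) (fun al => scal (/2) (plus (g al) (h al))) 0 1).
        - lra.
        - apply ex_RInt_const.
        - exact Es.
        - intros z Hz.
          change (f ((x + y) / 2) <= / 2 * (g z + h z)).
          unfold g, h.
          pose proof (hconv ((y - x) * z + x) ((x - y) * z + y) (/2)) as Hc.
          replace (/ 2 * ((y - x) * z + x) + (1 - / 2) * ((x - y) * z + y))
            with ((x + y) / 2) in Hc by field.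
          assert (0 <= (y - x) * z) by (apply Rmult_le_pos; lra).
          assert ((y - x) * z <= (y - x)) by (rewrite <- (Rmult_1_r (y - x)) at 2; apply Rmult_le_compat_l; lra).
          assert (Hc' := Hc ltac:(lra) ltac:(lra) ltac:(lra)). lra. }
      rewrite Ec, Ei, Hs in Hl.
      lra.
  - set (L := fun al => (1 - al) * f x + al * f y).
    set (F := fun z => f x * z - f x * z ^ 2 / 2 + f y * z ^ 2 / 2).
    assert (HI : is_RInt L 0 1 (minus (F 1) (F 0))).
    { apply (@is_RInt_derive R_CompleteNormedModule F L 0 1).
      - intros z _. unfold L, F. auto_derive; [auto | field].
      - intros z _. apply (@ex_derive_continuous R_AbsRing R_NormedModule L z). unfold L. auto_derive. auto. }
    assert (HL : RInt L 0 1 = (f x + f y) / 2).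
    { rewrite (is_RInt_unique _ _ _ _ HI). unfold F, minus, plus, opp; simpl. field. }
    rewrite <- HL. apply RInt_le; [lra | apply exg; auto | exists (minus (F 1) (F 0)); exact HI |].
    + intros z Hz. unfold L.
      pose proof (hconv y x z Hy Hx ltac:(lra)) as Hc.
      replace (z * y + (1 - z) * x) with ((y - x) * z + x) in Hc by ring. lra.
Qed.

End S.

Theorem theorem2p1 (a b : R) (f : R -> R) (hab : a < b)
  (hconv : convex_on a b f) (hint : ex_RInt f a b) (t : R) (ht : 0 <= t <= 1) :
  f (t * b + (1 - t) * a)
    <= (1 - t) * RInt (fun al => f (t * al * (b - a) + a)) 0 1
       + t * RInt (fun al => f ((1 - t) * al * (b - a) + t * b + (1 - t) * a)) 0 1
  /\
  (1 - t) * RInt (fun al => f (t * al * (b - a) + a)) 0 1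
       + t * RInt (fun al => f ((1 - t) * al * (b - a) + t * b + (1 - t) * a)) 0 1
    <= t * f b + (1 - t) * f a.
Proof.
  set (c := t * b + (1 - t) * a).
  assert (Hc : a <= c <= b) by (unfold c; split; nra).
  rewrite (RInt_ext (fun al => f (t * al * (b - a) + a)) (fun al => f ((c - a) * al + a)))
    by (intros z _; f_equal; unfold c; ring).
  rewrite (RInt_ext (fun al => f ((1 - t) * al * (b - a) + t * b + (1 - t) * a)) (fun al => f ((b - c) * al + c)))
    by (intros z _; f_equal; unfold c; ring).
  assert (Ha : a <= a <= b) by lra.
  assert (Hb : a <= b <= b) by lra.
  destruct (HH a b f hconv hint a c Ha Hc ltac:(lra)) as [L1 R1].
  destruct (HH a b f hconv hint c b Hc Hb ltac:(lra)) as [L2 R2].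
  set (I1 := RInt (fun al => f ((c - a) * al + a)) 0 1) in *.
  set (I2 := RInt (fun al => f ((b - c) * al + c)) 0 1) in *.
  assert (Fc : f c <= t * f b + (1 - t) * f a) by (apply hconv; lra).
  assert (Fm : f c <= (1 - t) * f ((a + c) / 2) + t * f ((c + b) / 2)).
  { pose proof (hconv ((a + c) / 2) ((c + b) / 2) (1 - t) ltac:(lra) ltac:(lra) ltac:(lra)) as H.
    replace ((1 - t) * ((a + c) / 2) + (1 - (1 - t)) * ((c + b) / 2)) with c in H
      by (unfold c; field).
    replace (1 - (1 - t)) with t in H by ring. exact H. }
  assert (P1 : 0 <= 1 - t) by lra.
  split.
  - pose proof (Rmult_le_compat_l _ _ _ P1 L1).
    pose proof (Rmult_le_compat_l _ _ _ (proj1 ht) L2). lra.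
  - pose proof (Rmult_le_compat_l _ _ _ P1 R1).
    pose proof (Rmult_le_compat_l _ _ _ (proj1 ht) R2). lra.
Qed.
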